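(* Let $n \in \mathbb{Z}_{\geq 0}$, $k \in \mathbb{Z}_{\geq 1}$, $m_1,\dots,m_k\in\mathbb{Z}_{\geq 2}$, and let \[ G = \langle e_1, \ldots, e_k, h_1, \ldots, h_{2n} \mid e_1^{m_1} = \cdots = e_k^{m_k} = 1 \rangle . \] Let $G_1$ be the subgroup of $G$ generated by $\{e_1,\dots,e_k\}$ and let $S_1\subset G$ be the set defined below. Then for every $w \in G_1$ there exist an element $\gamma$ of the subgroup $\langle S_1\rangle$ generated by $S_1$ and integers $i_1,\dots,i_k$ such that $\gamma w = e_k^{i_k}\cdots e_1^{i_1}$.
   Context: Notation: $[l]=\{1,\dots,l\}$ for $l\in\mathbb{Z}_{>0}$; $[g,h]=ghg^{-1}h^{-1}$ and ${}^{g}h = ghg^{-1}$. For $2\le t\le k$ set $\Lambda_t = \big(([m_1]\times\cdots\times[m_{t-1}])\setminus\{(m_1,\dots,m_{t-1})\}\big)\times[m_t-1]$ and $\Xi_t=[m_{t+1}]\times\cdots\times[m_k]$, where $\Xi_k=\{0\}$. For $\lambda=(u_1,\dots,u_t)\in\Lambda_t$ and $\xi=(u_{t+1},\dots,u_k)\in\Xi_t$ put $f_\lambda=[e_t^{u_t}, e_{t-1}^{u_{t-1}}\cdots e_1^{u_1}]$ and $g_\xi = e_k^{u_k}\cdots e_{t+1}^{u_{t+1}}$ (with $g_\xi=1$ for $\xi\in\Xi_k$). Then $S_1=\{{}^{g_\xi}f_\lambda \mid 2\le t\le k,\ \lambda\in\Lambda_t,\ \xi\in\Xi_t\}$. *)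

(* Defs.v *)
(* Concrete model of the finitely presented group
   G = < e_1..e_k, h_1..h_{2n} | e_i^{m_i} = 1 >  (free product of cyclic
   groups Z/m_i and a free group of rank 2n) via words and a normal form. *)
From mathcomp Require Import all_boot all_order all_algebra.
Set Implicit Arguments. Unset Strict Implicit. Unset Printing Implicit Defensive.

(* Letters: [E i a] stands for e_i^a, [H j b] for h_j (b = true) or h_j^{-1}. *)
Inductive letter := E of nat & nat | H of nat & bool.

Definition word := seq letter.

Section Model.
Variable m : nat -> nat.

Definition push (x : letter) (w : word) : word :=
  match x with
  | E i a =>
      let a' := a %% m i in
      match w with
      | E j b :: w' =>
          if j == i then
            let c := (a' + b) %% m i in
            if c == 0 then w' else E i c :: w'
          else if a' == 0 then w else E i a' :: w
      | _ => if a' == 0 then w else E i a' :: w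
      end
  | H j b =>
      match w with
      | H j' b' :: w' => if (j' == j) && (b' == ~~ b) then w' else x :: w
      | _ => x :: w
      end
  end.

Definition norm (w : word) : word := foldr push [::] w.

Definition Geq (u v : word) : Prop := norm u = norm v.

Definition linv (x : letter) : letter :=
  match x with E i a => E i (m i - a %% m i) | H j b => H j (~~ b) end.
Definition ginv (w : word) : word := rev (map linv w).
Definition gmul (u v : word) : word := u ++ v.
Definition gone : word := [::].

Definition gcomm (g h : word) : word := gmul (gmul (gmul g h) (ginv g)) (ginv h).
Definition gconj (g h : word) : word := gmul (gmul g h) (ginv g).

Definition egen (i : nat) : word := [:: E i 1].
Definition epow (i u : nat) : word := flatten (nseq u (egen i)).
Definition epowz (i : nat) (z : int) : word :=
  match z with
  | Posz u => epow i u
  | Negz u => flatten (nseq u.+1 (ginv (egen i)))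
  end.

Inductive gen (S : word -> Prop) : word -> Prop :=
  | gen_base w : S w -> gen S w
  | gen_one : gen S gone
  | gen_mul u v : gen S u -> gen S v -> gen S (gmul u v)
  | gen_inv u : gen S u -> gen S (ginv u).

Definition valid_letter (n k : nat) (x : letter) : bool :=
  match x with E i _ => (1 <= i <= k) | H j _ => (1 <= j <= 2 * n) end.
Definition in_G (n k : nat) (w : word) : Prop := all (valid_letter n k) w.

Definition G1gens (k : nat) (w : word) : Prop :=
  exists i, (1 <= i <= k)%N /\ w = egen i.
Definition in_G1 (k : nat) (w : word) : Prop := gen (G1gens k) w.

Definition eprod_desc (lo hi : nat) (u : nat -> nat) : word :=
  flatten [seq epow j (u j) | j <- rev (iota lo (hi.+1 - lo))].

Definition f_lam (t : nat) (u : nat -> nat) : word :=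
  gcomm (epow t (u t)) (eprod_desc 1 t.-1 u).
Definition g_xi (k t : nat) (u : nat -> nat) : word := eprod_desc t.+1 k u.

(* The set S_1: a tuple (u_1,...,u_k) encodes (lambda, xi). *)
Definition S1 (k : nat) (w : word) : Prop :=
  exists t (u : nat -> nat),
    [/\ (2 <= t <= k)%N,
        (forall j, (1 <= j <= k)%N -> (1 <= u j <= m j)%N),
        (u t <= (m t).-1)%N,
        (exists j, (1 <= j <= t.-1)%N /\ (u j != m j)) &
        w = gconj (g_xi k t u) (f_lam t u)].

Definition enormal (k : nat) (z : nat -> int) : word :=
  flatten [seq epowz j (z j) | j <- rev (iota 1 k)].

End Model.

(* Main.v *)
Require Import Defs.
From mathcomp Require Import all_boot all_order all_algebra.
From mathcomp Require Import zify.
From Stdlib Require Import Setoid Morphisms.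
Set Implicit Arguments. Unset Strict Implicit. Unset Printing Implicit Defensive.

Section Grp.
Variable m : nat -> nat.

Definition okl (x : letter) := match x with E i d => (d != 0) && (d %% m i == d) | H _ _ => true end.
Definition compat (x y : letter) := match x, y with
  | E i _, E j _ => i != j
  | H j b, H j' b' => ~~ ((j' == j) && (b' == ~~ b))
  | _, _ => true end.
Definition compat_hd x (w : word) := if w is y :: _ then compat x y else true.
Fixpoint reduced (w : word) := if w is x :: w' then [&& okl x, compat_hd x w' & reduced w'] else true.

Definition hdE i (t : word) := if t is E j _ :: _ then j == i else false.

Lemma pushE_mod i a w : push m (E i a) w = push m (E i (a %% m i)) w.
Proof. by rewrite /push modn_mod. Qed.

Lemma pushE_nh i a t : ~~ hdE i t ->
  push m (E i a) t = if a %% m i == 0 then t else E i (a %% m i) :: t.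
Proof. by case: t => [|[j d|j d] t'] //= /negbTE ->. Qed.

Lemma pushE_h i a d t : push m (E i a) (E i d :: t) =
  if (a %% m i + d) %% m i == 0 then t else E i ((a %% m i + d) %% m i) :: t.
Proof. by rewrite /= eqxx. Qed.

Lemma compatE i a j b : compat (E i a) (E j b) = (i != j). Proof. by []. Qed.

Lemma push_red x w : reduced w -> reduced (push m x w).
Proof.
case: x => [i a|j b].
  case h: (hdE i w).
    case: w h => [|[j d|j d] w'] //= /eqP -> /and3P[_ c r].
    rewrite eqxx; case: ifP => [_|/negbT nz] //=.
    rewrite /= nz modn_mod eqxx r andbT /=.
    by case: w' c {r} => [|[? ?|? ?] ?] //=; rewrite andbT.
  move=> rw; rewrite pushE_nh ?h //; case: ifP => [_|/negbT nz] //=.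
  rewrite nz modn_mod eqxx rw /= andbT.
  by case: w h {rw} => [|[j d|j d] w'] //= /negbT; rewrite eq_sym.
case: w => [|[i a|j' b'] w'] //=.
case: ifP => [_|/negbT nc] /= /andP[r2 r3] //=.
by rewrite nc r2 r3.
Qed.

Lemma pushE0 i a w : reduced w -> a %% m i = 0 -> push m (E i a) w = w.
Proof.
move=> rw a0; case h: (hdE i w); last by rewrite pushE_nh ?h // a0 eqxx.
case: w h rw => [|[j d|j d] w'] //= /eqP -> /and3P[/andP[d0 /eqP dm] _ _].
by rewrite eqxx a0 add0n dm (negbTE d0).
Qed.

Lemma pushE_add i a c t : reduced t ->
  push m (E i a) (push m (E i c) t) = push m (E i (a + c)) t.
Proof.
move=> rt; case h: (hdE i t).
  case: t h rt => [|[j d|j d] t'] // /eqP -> /and3P[/andP[d0 /eqP dm] ct rt'].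
  have nh : ~~ hdE i t' by case: t' ct {rt'} => [|[? ?|? ?] ?] //=; rewrite eq_sym.
  rewrite !pushE_h; case: ifP => [/eqP c0|/negbT nz].
    have e : ((a + c) %% m i + d) %% m i = a %% m i.
      by rewrite modnDml -addnA -modnDmr -(modnDml c) c0 addn0.
    by rewrite pushE_nh // e.
  have e : (a %% m i + (c %% m i + d) %% m i) %% m i = ((a + c) %% m i + d) %% m i.
    by rewrite modnDmr modnDml addnA addnAC modnDmr addnAC [RHS]modnDml.
  by rewrite pushE_h e.
rewrite (pushE_nh c) ?h //; case: ifP => [/eqP c0|/negbT nz].
  by rewrite (pushE_nh a) ?h // (pushE_nh (a+c)) ?h // -(modnDmr a c) c0 addn0.
by rewrite pushE_h (pushE_nh (a+c)) ?h // modnDm.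
Qed.

Lemma pushH_inv j b t : reduced t -> push m (H j b) (push m (H j (~~ b)) t) = t.
Proof.
case: t => [|[i a|j' b'] t'] /=; rewrite ?eqxx ?negbK //=.
case: ifP => [/andP[/eqP -> /eqP ->] /andP[c _]|/negbT nc _] /=.
  by case: t' c => [|[? ?|j2 b2] ?] //= /negbTE ->.
by rewrite !eqxx.
Qed.

Lemma red_foldr r s : reduced r -> reduced (foldr (push m) r s).
Proof. by move=> rr; elim: s => //= x s IH; apply: push_red. Qed.

Lemma red_norm s : reduced (norm m s).
Proof. exact: red_foldr. Qed.

Lemma foldr_cons' (r : word) x s : foldr (push m) r (x :: s) = push m x (foldr (push m) r s).
Proof. by []. Qed.

Lemma push_act x s r : reduced s -> reduced r ->
  foldr (push m) r (push m x s) = push m x (foldr (push m) r s).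
Proof.
move=> rs rr; case: x => [i a|j b].
  case h: (hdE i s).
    case: s h rs => [|[j c|j c] s'] // /eqP -> _.
    rewrite pushE_h foldr_cons' pushE_add ?red_foldr //.
    case: ifP => [/eqP c0|_].
      by rewrite pushE0 ?red_foldr // -modnDml.
    by rewrite foldr_cons' pushE_mod [RHS]pushE_mod modn_mod modnDml.
  rewrite (pushE_nh a) ?h //; case: ifP => [/eqP a0|_].
    by rewrite pushE0 ?red_foldr.
  by rewrite foldr_cons' [RHS]pushE_mod.
case: s rs => [|[i a|j' b'] s'] _; [by []|by []|].
change (push m (H j b) (H j' b' :: s')) with
  (if (j' == j) && (b' == ~~ b) then s' else H j b :: H j' b' :: s').
case: ifP => [/andP[/eqP -> /eqP ->]|_].
  by rewrite foldr_cons' pushH_inv ?red_foldr.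
by rewrite foldr_cons'.
Qed.

Lemma norm_act r u : reduced r -> foldr (push m) r u = foldr (push m) r (norm m u).
Proof.
move=> rr; elim: u => //= x u IH.
by rewrite IH push_act ?red_norm.
Qed.

Lemma catL a b c : Geq m a b -> Geq m (c ++ a) (c ++ b).
Proof. by rewrite /Geq /norm !foldr_cat => ->. Qed.

Lemma catR a b c : Geq m a b -> Geq m (a ++ c) (b ++ c).
Proof.
rewrite /Geq /norm !foldr_cat => e.
rewrite (norm_act _ (red_norm c)) [RHS](norm_act _ (red_norm c)).
by rewrite /norm e.
Qed.

Global Instance Geq_equiv : Equivalence (Geq m).
Proof. split; rewrite /Geq; [by [] | by move=> ? ? -> | by move=> ? ? ? -> ->]. Qed.

Global Instance cat_proper : Proper (Geq m ==> Geq m ==> Geq m) (@cat letter).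
Proof. move=> a a' ha b b' hb; rewrite (catL a hb); exact: catR. Qed.

Global Instance cons_proper x : Proper (Geq m ==> Geq m) (cons x).
Proof. move=> a b h; exact: (catL [:: x] h). Qed.

End Grp.

Section Grp2.
Variable m : nat -> nat.

Lemma Geq_trans a b c : Geq m a b -> Geq m b c -> Geq m a c.
Proof. by rewrite /Geq => -> ->. Qed.
Lemma Geq_sym a b : Geq m a b -> Geq m b a.
Proof. by rewrite /Geq => ->. Qed.

Definition posl (x : letter) := if x is E i _ then 0 < m i else true.
Definition posw (w : word) := all posl w.

Lemma posw_cat a b : posw (a ++ b) = posw a && posw b.
Proof. exact: all_cat. Qed.

Lemma posw_ginv a : posw (ginv m a) = posw a.
Proof. by rewrite /posw /ginv all_rev all_map; apply: eq_all => -[]. Qed.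

Lemma ginv_cat a b : ginv m (a ++ b) = ginv m b ++ ginv m a.
Proof. by rewrite /ginv map_cat rev_cat. Qed.

Lemma ginv_cons x a : ginv m (x :: a) = ginv m a ++ [:: linv m x].
Proof. by rewrite /ginv /= rev_cons cats1. Qed.

Lemma letter_r x : posl x -> Geq m [:: x; linv m x] [::].
Proof.
case: x => [i a|j b] /= hp; rewrite /Geq /norm !foldr_cons'; change (foldr (push m) [::] [::]) with (@nil letter).
  rewrite pushE_add // pushE0 //.
  by rewrite -modnDml subnKC ?modnn // ltnW // ltn_pmod.
by rewrite pushH_inv.
Qed.

Lemma letter_l x : posl x -> Geq m [:: linv m x; x] [::].
Proof.
case: x => [i a|j b] /= hp; rewrite /Geq /norm !foldr_cons'; change (foldr (push m) [::] [::]) with (@nil letter).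
  rewrite pushE_add // pushE0 //.
  by rewrite -modnDmr subnK ?modnn // ltnW // ltn_pmod.
by rewrite -{2}(negbK b) pushH_inv.
Qed.

Lemma inv_r a : posw a -> Geq m (a ++ ginv m a) [::].
Proof.
elim: a => //= x a IH /andP[px pa].
rewrite ginv_cons catA.
change ((x :: a) ++ ginv m a) with ([:: x] ++ (a ++ ginv m a)).
setoid_rewrite (IH pa). exact: letter_r.
Qed.

Lemma inv_l a : posw a -> Geq m (ginv m a ++ a) [::].
Proof.
elim: a => //= x a IH /andP[px pa].
rewrite ginv_cons -catA.
change ([:: linv m x] ++ x :: a) with ([:: linv m x; x] ++ a).
setoid_rewrite (letter_l px). exact: IH.
Qed.

Lemma canc v w : posw v -> Geq m (ginv m v ++ (v ++ w)) w.
Proof. by move=> pv; rewrite catA; setoid_rewrite (inv_l pv). Qed.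

Lemma canc_r v w : posw v -> Geq m (v ++ (ginv m v ++ w)) w.
Proof. by move=> pv; rewrite catA; setoid_rewrite (inv_r pv). Qed.

Lemma ginv2 v : posw v -> Geq m (ginv m (ginv m v)) v.
Proof.
move=> pv; have pv' : posw (ginv m v) by rewrite posw_ginv.
rewrite -[X in Geq m X _]cats0; setoid_rewrite <- (inv_l pv) at 1.
by rewrite catA; setoid_rewrite (inv_l pv').
Qed.

Lemma ginv_congr a b : posw a -> posw b -> Geq m a b -> Geq m (ginv m a) (ginv m b).
Proof.
move=> pa pb e.
rewrite -[X in Geq m X _]cats0; setoid_rewrite <- (inv_r pb) at 1.
apply: (Geq_trans (catL (ginv m a) (catR (ginv m b) (Geq_sym e)))).
exact: canc.
Qed.

End Grp2.

Section Grp3.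
Variable m : nat -> nat.

Lemma epow_S i n : epow i n.+1 = epow i n ++ egen i.
Proof.
rewrite /epow; elim: n => [|n IH]; first by [].
change (flatten (nseq n.+2 (egen i))) with (egen i ++ flatten (nseq n.+1 (egen i))).
by rewrite [in LHS]IH catA.
Qed.

Lemma norm_epow i n : norm m (epow i n) = push m (E i n) [::].
Proof.
elim: n => [|n IH].
  by rewrite /= mod0n.
change (norm m (epow i n.+1)) with (push m (E i 1) (norm m (epow i n))).
by rewrite IH pushE_add // add1n.
Qed.

Lemma epow_mod i a b : a %% m i = b %% m i -> Geq m (epow i a) (epow i b).
Proof. by move=> e; rewrite /Geq !norm_epow pushE_mod [RHS]pushE_mod e. Qed.

Lemma epow0 i a : a %% m i = 0 -> Geq m (epow i a) [::].
Proof. by move=> e; rewrite /Geq !norm_epow pushE0. Qed.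

Lemma posw_epow i n : 0 < m i -> posw m (epow i n).
Proof. by move=> h; elim: n => // n IH; rewrite epow_S posw_cat IH /= h. Qed.

Lemma posw_flat (s : seq nat) (f : nat -> word) :
  (forall j, j \in s -> posw m (f j)) -> posw m (flatten [seq f j | j <- s]).
Proof.
elim: s => //= j s IH h; rewrite posw_cat h ?mem_head // IH // => j' js.
by apply: h; rewrite in_cons js orbT.
Qed.

Lemma triv_flat (s : seq nat) (f : nat -> word) :
  (forall j, j \in s -> Geq m (f j) [::]) -> Geq m (flatten [seq f j | j <- s]) [::].
Proof.
elim: s => //= j s IH h.
setoid_rewrite (h j (mem_head _ _)). apply: IH => j' js.
by apply: h; rewrite in_cons js orbT.
Qed.

Lemma mem_range lo hi j : (j \in rev (iota lo (hi.+1 - lo))) = (lo <= j <= hi).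
Proof. rewrite mem_rev mem_iota; apply/idP/idP => /andP[h1 h2]; apply/andP; split; lia. Qed.

Lemma posw_eprod lo hi u : (forall j, lo <= j <= hi -> 0 < m j) -> posw m (eprod_desc lo hi u).
Proof.
move=> h; apply: posw_flat => j; rewrite mem_range => /h; exact: posw_epow.
Qed.

Lemma triv_eprod lo hi u : (forall j, lo <= j <= hi -> u j %% m j = 0) ->
  Geq m (eprod_desc lo hi u) [::].
Proof.
move=> h; apply: triv_flat => j; rewrite mem_range => /h; exact: epow0.
Qed.

Lemma eprod_ext lo hi u v : (forall j, lo <= j <= hi -> u j = v j) ->
  eprod_desc lo hi u = eprod_desc lo hi v.
Proof.
move=> h; rewrite /eprod_desc; congr flatten; apply/eq_in_map => j.
by rewrite mem_range => /h ->.
Qed.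

Lemma eprod_split i hi u : 1 <= i <= hi ->
  eprod_desc 1 hi u = eprod_desc i.+1 hi u ++ epow i (u i) ++ eprod_desc 1 i.-1 u.
Proof.
move=> /andP[h1 h2]; rewrite /eprod_desc.
have -> : hi.+1 - 1 = (i.-1.+1 - 1) + (hi.+1 - i.+1).+1 by lia.
rewrite iotaD.
have -> : 1 + (i.-1.+1 - 1) = i by lia.
rewrite /= rev_cat rev_cons -cats1 !map_cat !flatten_cat /= cats0 catA.
done.
Qed.

Lemma calc X A Y e : posw m X -> posw m A -> posw m Y -> posw m e ->
  Geq m ((gconj m X (gcomm m (A ++ e) Y) ++ ginv m (gconj m X (gcomm m A Y)))
          ++ ((X ++ A ++ Y) ++ e))
        (X ++ (A ++ e) ++ Y).
Proof.
move=> pX pA pY pe.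
rewrite /gconj /gcomm /gmul !ginv_cat.
setoid_rewrite (ginv2 pX). setoid_rewrite (ginv2 pY). setoid_rewrite (ginv2 pA).
rewrite -!catA.
setoid_rewrite (canc _ pX).
setoid_rewrite (canc _ pY).
setoid_rewrite (canc _ pA).
setoid_rewrite (canc _ pX).
setoid_rewrite (canc _ pA).
setoid_rewrite (canc _ pY).
setoid_rewrite (inv_l pe).
by rewrite cats0.
Qed.

End Grp3.

Section Grp4.
Variable m : nat -> nat.

Lemma ginv_triv A : posw m A -> Geq m A [::] -> Geq m (ginv m A) [::].
Proof. by move=> pA h; apply: (ginv_congr pA _ h). Qed.

Lemma comm_trivA A Y : posw m A -> posw m Y -> Geq m A [::] -> Geq m (gcomm m A Y) [::].
Proof.
move=> pA pY h; rewrite /gcomm /gmul.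
have h' := ginv_triv pA h.
setoid_rewrite h'; setoid_rewrite h; rewrite /= cats0. exact: inv_r.
Qed.

Lemma comm_trivY A Y : posw m A -> posw m Y -> Geq m Y [::] -> Geq m (gcomm m A Y) [::].
Proof.
move=> pA pY h; rewrite /gcomm /gmul.
have h' := ginv_triv pY h.
setoid_rewrite h'; setoid_rewrite h; rewrite !cats0. exact: inv_r.
Qed.

Lemma conj_triv X c : posw m X -> Geq m c [::] -> Geq m (gconj m X c) [::].
Proof.
move=> pX h; rewrite /gconj /gmul.
setoid_rewrite h; rewrite cats0. exact: inv_r.
Qed.

Lemma posw_conj X c : posw m X -> posw m c -> posw m (gconj m X c).
Proof. by move=> a b; rewrite /gconj /gmul !posw_cat posw_ginv a b. Qed.

Lemma posw_comm X c : posw m X -> posw m c -> posw m (gcomm m X c).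
Proof. by move=> a b; rewrite /gcomm /gmul !posw_cat !posw_ginv a b. Qed.

Lemma comm_congrA A A' Y : posw m A -> posw m A' -> Geq m A A' ->
  Geq m (gcomm m A Y) (gcomm m A' Y).
Proof.
move=> pA pA' h; rewrite /gcomm /gmul.
have h' := ginv_congr pA pA' h.
by setoid_rewrite h'; setoid_rewrite h.
Qed.

Variable k : nat.

Lemma comm_S1 t u a :
  (forall j, 1 <= j <= k -> 1 < m j) -> 1 <= t <= k ->
  (forall j, 1 <= j <= k -> 1 <= u j <= m j) ->
  exists c, [/\ gen m (S1 m k) c, posw m c &
    Geq m c (gconj m (eprod_desc t.+1 k u) (gcomm m (epow t a) (eprod_desc 1 t.-1 u)))].
Proof.
move=> hm /andP[t1 tk] hu.
have hp : forall j, 1 <= j <= k -> 0 < m j by move=> j /hm; lia.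
have pX : posw m (eprod_desc t.+1 k u) by apply: posw_eprod => j hj; apply: hp; lia.
have pY : posw m (eprod_desc 1 t.-1 u) by apply: posw_eprod => j hj; apply: hp; lia.
have pmt : 0 < m t by apply: hp; lia.
have pA : forall b, posw m (epow t b) by move=> b; apply: posw_epow.
case: (eqVneq (a %% m t) 0) => [a0|anz].
  exists (gone); split; [exact: (gen_one m) | by [] |].
  apply: Geq_sym; apply: conj_triv => //; apply: comm_trivA => //.
  exact: epow0.
case hh: (has (fun j => u j != m j) (iota 1 t.-1)); last first.
  exists (gone); split; [exact: (gen_one m) | by [] |].
  apply: Geq_sym; apply: conj_triv => //; apply: comm_trivY => //.
  apply: triv_eprod => j hj.
  have : j \in iota 1 t.-1 by rewrite mem_iota; lia.
  move/negbT: hh => /hasPn H /H; rewrite negbK => /eqP ->; exact: modnn.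
move/hasP: hh => [j0]; rewrite mem_iota => hj0 uj0.
pose u' := fun j => if j == t then a %% m t else u j.
have eX : eprod_desc t.+1 k u' = eprod_desc t.+1 k u.
  by apply: eprod_ext => j hj; rewrite /u'; case: eqP => //; lia.
have eY : eprod_desc 1 t.-1 u' = eprod_desc 1 t.-1 u.
  by apply: eprod_ext => j hj; rewrite /u'; case: eqP => //; lia.
exists (gconj m (g_xi k t u') (f_lam m t u')); split.
- apply: (gen_base m); exists t, u'; split.
  + lia.
  + move=> j hj; rewrite /u'; case: eqP => [->|_]; last exact: hu.
    have := ltn_pmod a pmt; move: anz; rewrite -lt0n; lia.
  + rewrite /u' eqxx; have := ltn_pmod a pmt; lia.
  + exists j0; split; first lia.
    have nt : j0 != t by apply/eqP => e; move: hj0; rewrite e add1n prednK // ltnn andbF.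
    by rewrite /u' (negbTE nt).
  + by [].
- by rewrite /g_xi /f_lam eX eY; apply: posw_conj => //; apply: posw_comm.
- rewrite /g_xi /f_lam eX eY /u' eqxx.
  apply: Geq_sym; rewrite /gconj /gmul.
  have := comm_congrA (eprod_desc 1 t.-1 u) (pA a) (pA (a %% m t)) (epow_mod (i:=t) (esym (modn_mod a (m t)))).
  move=> h; setoid_rewrite h. by [].
Qed.

End Grp4.

Section Grp5.
Variable m : nat -> nat.
Variable k : nat.

Definition valid (u : nat -> nat) := forall j, 1 <= j <= k -> 1 <= u j <= m j.
Definition flat (l : seq nat) : word := flatten (map egen l).

Lemma step u i : (forall j, 1 <= j <= k -> 1 < m j) -> 1 <= i <= k -> valid u ->
  exists d u', [/\ gen m (S1 m k) d, valid u' &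
     Geq m (d ++ (eprod_desc 1 k u ++ egen i)) (eprod_desc 1 k u')].
Proof.
move=> hm hi hu.
have [c1 [g1 p1 e1]] := comm_S1 (u i).+1 hm hi hu.
have [c0 [g0 p0 e0]] := comm_S1 (u i) hm hi hu.
have hp : forall j, 1 <= j <= k -> 0 < m j by move=> j /hm; lia.
have pX : posw m (eprod_desc i.+1 k u) by apply: posw_eprod => j hj; apply: hp; lia.
have pY : posw m (eprod_desc 1 i.-1 u) by apply: posw_eprod => j hj; apply: hp; lia.
have pmi : 1 < m i by apply: hm.
have pA : forall b, posw m (epow i b) by move=> b; apply: posw_epow; lia.
pose u' := fun j => if j == i then (if u i == m i then 1 else (u i).+1) else u j.
exists (c1 ++ ginv m c0), u'; split.
- exact: (gen_mul g1 (gen_inv g0)).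
- move=> j hj; rewrite /u'; case: eqP => [->|_]; last exact: hu.
  have := hu i hi; case: eqP => [_|ne]; lia.
have eX : eprod_desc i.+1 k u' = eprod_desc i.+1 k u.
  by apply: eprod_ext => j hj; rewrite /u'; case: eqP => //; lia.
have eY : eprod_desc 1 i.-1 u' = eprod_desc 1 i.-1 u.
  by apply: eprod_ext => j hj; rewrite /u'; case: eqP => //; lia.
have eA : Geq m (epow i (u' i)) (epow i (u i).+1).
  apply: epow_mod; rewrite /u' eqxx; case: eqP => // ->.
  by rewrite -[(m i).+1]addn1 modnDl.
rewrite (eprod_split u hi) (eprod_split u' hi) eX eY.
setoid_rewrite eA; rewrite epow_S.
have e0' := ginv_congr p0 (posw_conj pX (posw_comm (pA _) pY)) e0.
setoid_rewrite e0'. setoid_rewrite e1.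
rewrite epow_S; apply: calc => //=; rewrite andbT; lia.
Qed.

Lemma ginv_flat l : (forall j, 1 <= j <= k -> 1 < m j) -> all (fun i => 1 <= i <= k) l ->
  exists l', all (fun i => 1 <= i <= k) l' /\ Geq m (ginv m (flat l)) (flat l').
Proof.
move=> hm; elim: l => [|i l IH] /=; first by exists [::].
move=> /andP[hi al]; have [l1 [al1 e1]] := IH al.
exists (l1 ++ nseq (m i).-1 i); split.
  by rewrite all_cat al1 all_nseq hi orbT.
change (flat (i :: l)) with (egen i ++ flat l).
rewrite ginv_cat; setoid_rewrite e1.
rewrite /flat map_cat flatten_cat map_nseq -/(flat l1).
apply: catL.
have mi := hm i hi.
rewrite /Geq norm_epow /ginv /=.
change (norm m [:: E i (m i - 1 %% m i)]) with (push m (E i (m i - 1 %% m i)) (norm m [::])).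
by rewrite (modn_small mi) subn1.
Qed.

Lemma G1_flat w : (forall j, 1 <= j <= k -> 1 < m j) -> gen m (G1gens k) w ->
  posw m w /\ exists l, all (fun i => 1 <= i <= k) l /\ Geq m w (flat l).
Proof.
move=> hm; elim=> [w0 [i [hi ->]] | | u v _ [pu [lu [alu eu]]] _ [pv [lv [alv ev]]] | u _ [pu [lu [alu eu]]]].
- split; first by rewrite /posw /= andbT; have := hm i hi; lia.
  by exists [:: i]; split; [rewrite /= hi | ].
- by split => //; exists [::].
- split; first by rewrite /gmul posw_cat pu pv.
  exists (lu ++ lv); rewrite all_cat alu alv; split => //.
  rewrite /gmul /flat map_cat flatten_cat -!/(flat _).
  by setoid_rewrite eu; setoid_rewrite ev.
- split; first by rewrite posw_ginv.
  have pl : posw m (flat lu).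
    rewrite /flat; apply: posw_flat => j /(allP alu) hj; rewrite /posw /= andbT.
    have := hm j hj; lia.
  have [l' [al' e']] := ginv_flat hm alu.
  exists l'; split => //.
  apply: Geq_trans e'; exact: ginv_congr.
Qed.

Lemma main_list l : (forall j, 1 <= j <= k -> 1 < m j) -> all (fun i => 1 <= i <= k) l ->
  exists gamma u, [/\ gen m (S1 m k) gamma, valid u &
     Geq m (gamma ++ flat l) (eprod_desc 1 k u)].
Proof.
move=> hm; elim/last_ind: l => [|l x IH].
  move=> _; exists gone, m; split.
  - exact: (gen_one m).
  - by move=> j hj; have := hm j hj; lia.
  - apply: Geq_sym; apply: triv_eprod => j _; exact: modnn.
rewrite all_rcons => /andP[hx al].
have [g [u [gg vu eg]]] := IH al.
have [d [u' [gd vu' ed]]] := step hm hx vu.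
exists (d ++ g), u'; split => //.
  exact: (gen_mul gd gg).
have -> : flat (rcons l x) = flat l ++ egen x by rewrite /flat map_rcons -cats1 flatten_cat /= ?cats0.
rewrite -catA (catA g).
by setoid_rewrite eg.
Qed.

End Grp5.

Theorem lemma3p8 (n k : nat) (m : nat -> nat) :
  (1 <= k)%N ->
  (forall i, (1 <= i <= k)%N -> (2 <= m i)%N) ->
  forall w : word, in_G n k w -> in_G1 m k w ->
  exists (gamma : word) (z : nat -> int),
    gen m (S1 m k) gamma /\
    Geq m (gmul gamma w) (enormal m k z).
Proof.
move=> hk hm w _ hw.
have [_ [l [al el]]] := G1_flat hm hw.
have [g [u [gg vu eg]]] := main_list hm al.
exists g, (fun j => Posz (u j)); split => //.
have -> : enormal m k (fun j => Posz (u j)) = eprod_desc 1 k u.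
  by rewrite /enormal /eprod_desc subSS subn0.
rewrite /gmul; setoid_rewrite el; exact: eg.
Qed.
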